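(* Let $(C,\ll)$ be an abstract basis that is also interpolative from the $+$ direction, i.e. for every $x\in C$ and finite $F\subseteq C$ with $x\ll f$ for all $f\in F$, there is $y\in C$ with $x\ll y$ and $y\ll f$ for all $f\in F$. Let $\mathrm{int}(C)=\{(a,b)\in C^2: a\ll b\}$ with the relation $(a,b)\ll(c,d)$ iff $a\ll c$ and $d\ll b$. Then $(\mathrm{int}(C),\ll)$ is an abstract basis.
   Context: An abstract basis is a set $B$ with a transitive relation $<$ that is interpolative: for every $x\in B$ and every finite $M\subseteq B$ with $m<x$ for all $m\in M$, there exists $y\in B$ with $m<y$ for all $m\in M$ and $y<x$. *)

(* Defs.v *)
From Stdlib Require Import List.
Import ListNotations.

(* Finite subsets of a type are represented by (finite) lists. *)

Definition interpolative {B : Type} (R : B -> B -> Prop) : Prop :=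
  forall (x : B) (M : list B),
    (forall m, In m M -> R m x) ->
    exists y : B, (forall m, In m M -> R m y) /\ R y x.

Definition abstract_basis {B : Type} (R : B -> B -> Prop) : Prop :=
  (forall x y z, R x y -> R y z -> R x z) /\ interpolative R.

Definition interpolative_plus {B : Type} (R : B -> B -> Prop) : Prop :=
  forall (x : B) (F : list B),
    (forall f, In f F -> R x f) ->
    exists y : B, R x y /\ (forall f, In f F -> R y f).

Definition intC {C : Type} (R : C -> C -> Prop) : Type :=
  { p : C * C | R (fst p) (snd p) }.

Definition int_rel {C : Type} (R : C -> C -> Prop) (p q : intC R) : Prop :=
  R (fst (proj1_sig p)) (fst (proj1_sig q)) /\
  R (snd (proj1_sig q)) (snd (proj1_sig p)).

(* Main.v *)
Require Import Defs.
From Stdlib Require Import List.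
Import ListNotations.

Theorem mainTheorem5 (C : Type) (R : C -> C -> Prop) :
  abstract_basis R -> interpolative_plus R -> abstract_basis (int_rel R).
Proof.
  intros [Htr Hint] Hplus. split.
  - intros [[a b] Hab] [[c d] Hcd] [[e f] Hef]; unfold int_rel; simpl.
    intros [H1 H2] [H3 H4]. split; eauto.
  - intros [[x1 x2] Hx] M HM.
    destruct (Hint x1 (map (fun p => fst (proj1_sig p)) M)) as [y1 [Hy1 Hy1x]].
    { intros m Hm. apply in_map_iff in Hm. destruct Hm as [p [<- Hp]].
      apply (HM p Hp). }
    destruct (Hplus x2 (map (fun p => snd (proj1_sig p)) M)) as [y2 [Hxy2 Hy2]].
    { intros m Hm. apply in_map_iff in Hm. destruct Hm as [p [<- Hp]].
      apply (HM p Hp). }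
    assert (Hy : R (fst (y1, y2)) (snd (y1, y2))).
    { simpl. simpl in Hx. eauto. }
    exists (exist _ (y1, y2) Hy). split.
    + intros m Hm. unfold int_rel; simpl. split.
      * apply Hy1. apply in_map_iff. eauto.
      * apply Hy2. apply in_map_iff. eauto.
    + unfold int_rel; simpl. auto.
Qed.
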